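(* For the finite-alphabet cognitive MAC $P_{Y|X_1,X_2}$ with the matched metric $q(x_1,x_2,y)=\log P_{Y|X_1,X_2}(y|x_1,x_2)$, one has $\mathcal R^{sup}_{cog}=\mathcal R^{bin}_{cog}=\mathcal R^{match}_{cog}$, where $$\mathcal R^{match}_{cog}=\bigcup_{P_{X_1,X_2}}\{(R_1,R_2): R_2\le I_P(X_2;Y|X_1),\ R_1+R_2\le I_P(X_1,X_2;Y)\},\quad P=P_{X_1,X_2}P_{Y|X_1,X_2};$$ $\mathcal R^{sup}_{cog}$ is the closure of the convex hull of $\bigcup_P\tilde{\mathcal R}^{sup}_{cog}(P)$ with $\tilde{\mathcal R}^{sup}_{cog}(P)=\{(R_1,R_2):R_2\le\min_{\tilde P\in\mathcal L_2(P)}I_{\tilde P}(X_2;Y|X_1),\ R_1+R_2\le\min_{\tilde P\in\mathcal L_0(P):I_{\tilde P}(X_1;Y)\le R_1}I_{\tilde P}(X_1,X_2;Y)\}$; and $\mathcal R^{bin}_{cog}$ is the closure of the convex hull of $\bigcup_P\mathcal R^{bin,*}_{cog}(P)$, $\mathcal R^{bin,*}_{cog}(P)$ being the set of $(R_1,R_2)$ for which there exist $R_{1,a},R_{1,b}\ge0$ with $R_1=R_{1,a}+R_{1,b}$, $R_{1,a}\le R_1'(P)$, $R_{1,b}+R_2\le R_2'(P)$, and either $R_{1,a}\le R_1''(P,R_{1,b}+R_2)$ or $R_{1,b}+R_2\le R_2''(P,R_{1,a})$ (all unions over $P=P_{X_1,X_2}P_{Y|X_1,X_2}$).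
   Context: For a distribution $Q$ on $\mathcal X_1\times\mathcal X_2\times\mathcal Y$: $\mathcal G_q(Q)=\{f: f_{X_1,X_2}=Q_{X_1,X_2},\ \mathbb E_f q(X_1,X_2,Y)\ge\mathbb E_Q q(X_1,X_2,Y)\}$; $\mathcal L_1(Q)=\{f\in\mathcal G_q(Q):f_{X_2,Y}=Q_{X_2,Y}\}$; $\mathcal L_2(Q)=\{f\in\mathcal G_q(Q):f_{X_1,Y}=Q_{X_1,Y}\}$; $\mathcal L_0(Q)=\{f\in\mathcal G_q(Q):f_Y=Q_Y\}$. $R_1'(P)=\min_{\tilde P\in\mathcal L_1(P)}I_{\tilde P}(X_1;Y,X_2)$; $R_2'(P)=\min_{\tilde P\in\mathcal L_2(P)}I_{\tilde P}(X_2;Y|X_1)$; $R_1''(P,R_2)=\min_{\tilde P\in\mathcal L_0(P)}[I_{\tilde P}(X_1;Y)+|I_{\tilde P}(X_2;Y|X_1)-R_2|^+]$; $R_2''(P,R_1)=\min_{\tilde P\in\mathcal L_0(P)}[I_{\tilde P}(X_2;Y)-I_{\tilde P}(X_2;X_1)+|I_{\tilde P}(X_1;Y,X_2)-R_1|^+]$; $|t|^+=\max\{0,t\}$. *)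

(* Defs.v *)
From HB Require Import structures.
From mathcomp Require Import all_boot all_order all_algebra.
From mathcomp Require Import all_classical all_reals all_analysis.
Set Implicit Arguments. Unset Strict Implicit. Unset Printing Implicit Defensive.
Import Order.TTheory GRing.Theory Num.Theory numFieldNormedType.Exports.
Local Open Scope classical_set_scope.
Local Open Scope ring_scope.

Definition px1 {X1 X2 Y : finType} (t : (X1 * X2 * Y)%type) : X1 := t.1.1.
Definition px2 {X1 X2 Y : finType} (t : (X1 * X2 * Y)%type) : X2 := t.1.2.
Definition py  {X1 X2 Y : finType} (t : (X1 * X2 * Y)%type) : Y := t.2.
Definition px12 {X1 X2 Y : finType} (t : (X1 * X2 * Y)%type) : (X1 * X2)%type := t.1.

Definition is_dist {R : realType} {T : finType} (f : T -> R) : Prop :=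
  (forall t, 0 <= f t) /\ \sum_(t : T) f t = 1.

Definition marg {R : realType} {T U : finType} (f : T -> R) (g : T -> U) (u : U) : R :=
  \sum_(s : T | g s == u) f s.

Definition pm {R : realType} {T U : finType} (f : T -> R) (g : T -> U) (t : T) : R :=
  marg f g (g t).

Definition MI {R : realType} {T A B : finType} (f : T -> R) (gA : T -> A) (gB : T -> B) : R :=
  \sum_(t : T) f t * ln (pm f (fun s => (gA s, gB s)) t / (pm f gA t * pm f gB t)).

Definition CMI {R : realType} {T A B C : finType} (f : T -> R)
  (gA : T -> A) (gB : T -> B) (gC : T -> C) : R :=
  \sum_(t : T) f t * ln (pm f (fun s => (gA s, gB s, gC s)) t * pm f gC t /
                         (pm f (fun s => (gA s, gC s)) t * pm f (fun s => (gB s, gC s)) t)).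

Definition is_channel {R : realType} {X1 X2 Y : finType} (W : X1 -> X2 -> Y -> R) : Prop :=
  (forall a b y, 0 <= W a b y) /\ (forall a b, \sum_(y : Y) W a b y = 1).

Definition joint {R : realType} {X1 X2 Y : finType} (PX : (X1 * X2)%type -> R)
  (W : X1 -> X2 -> Y -> R) (t : (X1 * X2 * Y)%type) : R :=
  PX t.1 * W t.1.1 t.1.2 t.2.

Definition qmatch {R : realType} {X1 X2 Y : finType} (W : X1 -> X2 -> Y -> R)
  (t : (X1 * X2 * Y)%type) : \bar R :=
  if 0 < W t.1.1 t.1.2 t.2 then (ln (W t.1.1 t.1.2 t.2))%:E else -oo%E.

(* E_f q, with the convention 0 * (-oo) = 0 *)
Definition Eq {R : realType} {X1 X2 Y : finType} (W : X1 -> X2 -> Y -> R)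
  (f : (X1 * X2 * Y)%type -> R) : \bar R :=
  (\sum_(t : (X1 * X2 * Y)%type) (if f t == 0%R then 0 else (f t)%:E * qmatch W t))%E.

Section Sets.
Context {R : realType} {X1 X2 Y : finType}.
Notation T := (X1 * X2 * Y)%type.

Definition Gq (W : X1 -> X2 -> Y -> R) (Q : T -> R) : set (T -> R) :=
  [set f | is_dist f /\ marg f px12 = marg Q px12 /\ (Eq W Q <= Eq W f)%E].
Definition L1 W Q : set (T -> R) :=
  [set f | Gq W Q f /\ marg f (fun t => (px2 t, py t)) = marg Q (fun t => (px2 t, py t))].
Definition L2 W Q : set (T -> R) :=
  [set f | Gq W Q f /\ marg f (fun t => (px1 t, py t)) = marg Q (fun t => (px1 t, py t))].
Definition L0 W Q : set (T -> R) :=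
  [set f | Gq W Q f /\ marg f py = marg Q py].

(* min over a set (as an infimum in the extended reals; +oo on the empty set) *)
Definition emin (S : set (T -> R)) (F : (T -> R) -> R) : \bar R :=
  ereal_inf [set (F f)%:E | f in S].

Definition R1' W P := emin (L1 W P) (fun f => MI f px1 (fun t => (py t, px2 t))).
Definition R2' W P := emin (L2 W P) (fun f => CMI f px2 py px1).
Definition R1'' W P (r2 : R) := emin (L0 W P)
  (fun f => MI f px1 py + Num.max 0 (CMI f px2 py px1 - r2)).
Definition R2'' W P (r1 : R) := emin (L0 W P)
  (fun f => MI f px2 py - MI f px2 px1 + Num.max 0 (MI f px1 (fun t => (py t, px2 t)) - r1)).

Definition Rmatch (W : X1 -> X2 -> Y -> R) : set (R * R) :=
  [set r | exists PX : (X1 * X2)%type -> R, is_dist PX /\ 0 <= r.1 /\ 0 <= r.2 /\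
     r.2 <= CMI (joint PX W) px2 py px1 /\ r.1 + r.2 <= MI (joint PX W) px12 py].

Definition Rsup_tilde W (P : T -> R) : set (R * R) :=
  [set r | 0 <= r.1 /\ 0 <= r.2 /\
     ((r.2)%:E <= emin (L2 W P) (fun f => CMI f px2 py px1))%E /\
     ((r.1 + r.2)%:E <= emin [set f | L0 W P f /\ (MI f px1 py <= r.1)%R]
                            (fun f => MI f px12 py))%E].

Definition Rbin_star W (P : T -> R) : set (R * R) :=
  [set r | exists r1a r1b : R, 0 <= r1a /\ 0 <= r1b /\ 0 <= r.2 /\ r.1 = r1a + r1b /\
     (r1a%:E <= R1' W P)%E /\ ((r1b + r.2)%:E <= R2' W P)%E /\
     ((r1a%:E <= R1'' W P (r1b + r.2))%E \/ ((r1b + r.2)%:E <= R2'' W P r1a)%E)].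

End Sets.

Definition conv2 {R : realType} (S : set (R * R)) : set (R * R) :=
  [set p | exists n (w : 'I_n -> R) (z : 'I_n -> (R * R)%type),
     (forall i, 0 <= w i) /\ \sum_(i < n) w i = 1 /\ (forall i, S (z i)) /\
     p = (\sum_(i < n) w i * (z i).1, \sum_(i < n) w i * (z i).2)].

Definition Rsup {R : realType} {X1 X2 Y : finType} (W : X1 -> X2 -> Y -> R) : set (R * R) :=
  closure (conv2 [set r | exists PX : (X1 * X2)%type -> R,
                             is_dist PX /\ Rsup_tilde W (joint PX W) r]).

Definition Rbin {R : realType} {X1 X2 Y : finType} (W : X1 -> X2 -> Y -> R) : set (R * R) :=
  closure (conv2 [set r | exists PX : (X1 * X2)%type -> R,
                             is_dist PX /\ Rbin_star W (joint PX W) r]).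

(* Main.v *)
Require Import Defs.
From mathcomp Require Import all_boot all_order all_algebra.
From mathcomp Require Import all_classical all_reals all_analysis.
From HB Require Import structures.
From mathcomp Require Import ring lra.
Set Implicit Arguments. Unset Strict Implicit. Unset Printing Implicit Defensive.
Import Order.TTheory GRing.Theory Num.Theory numFieldNormedType.Exports.
Local Open Scope classical_set_scope.
Local Open Scope ring_scope.

Section Gen.
Context {R : realType} {T : finType}.
Implicit Types f : T -> R.

Definition phi (x : R) := x * ln x.
Definition Phi {U : finType} f (g : T -> U) := \sum_(u : U) phi (marg f g u).

Lemma marg_ge0 {U : finType} f (g : T -> U) u : (forall t, 0 <= f t) -> 0 <= marg f g u.
Proof. by move=> f0; apply: sumr_ge0 => t _. Qed.

Lemma pm_ge {U : finType} f (g : T -> U) t : (forall t, 0 <= f t) -> f t <= pm f g t.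
Proof.
move=> f0; rewrite /pm /marg (bigD1 t) //= lerDl.
by apply: sumr_ge0 => s _.
Qed.

Lemma sum_pm_ln {U : finType} f (g : T -> U) :
  \sum_t f t * ln (pm f g t) = Phi f g.
Proof.
rewrite (partition_big g xpredT) //=; apply: eq_bigr => u _.
rewrite /phi {2}/marg big_distrl /=; apply: eq_big => t //.
by move=> /eqP <-.
Qed.

Lemma pm_equiv {U V : finType} f (g : T -> U) (g' : T -> V) :
  (forall s t, (g s == g t) = (g' s == g' t)) -> pm f g =1 pm f g'.
Proof. by move=> e t; rewrite /pm /marg; apply: eq_bigl => s; rewrite e. Qed.

Lemma Phi_equiv {U V : finType} f (g : T -> U) (g' : T -> V) :
  (forall s t, (g s == g t) = (g' s == g' t)) -> Phi f g = Phi f g'.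
Proof.
move=> e; rewrite -!sum_pm_ln; apply: eq_bigr => t _.
by rewrite (pm_equiv f e).
Qed.

Lemma Phi_marg {U : finType} f f' (g : T -> U) : marg f g = marg f' g -> Phi f g = Phi f' g.
Proof. by rewrite /Phi => ->. Qed.

Lemma marg_comp {U V : finType} f (g : T -> U) (h : U -> V) v :
  marg f (fun t => h (g t)) v = \sum_(u | h u == v) marg f g u.
Proof.
rewrite /marg (partition_big g (fun u => h u == v)) /=; last by move=> t.
apply: eq_bigr => u huv; apply: eq_bigl => t.
by case: (eqVneq (g t) u) => [->|]; rewrite ?andbT ?andbF.
Qed.

Lemma marg_comp_eq {U V : finType} f f' (g : T -> U) (g' : T -> V) (h : U -> V) :
  (forall t, g' t = h (g t)) -> marg f g = marg f' g -> marg f g' = marg f' g'.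
Proof.
move=> hg e; apply: funext => v.
have -> : g' = fun t => h (g t) by apply: funext.
by rewrite !marg_comp e.
Qed.

End Gen.

Section Gen2.
Context {R : realType} {T : finType}.
Implicit Types f : T -> R.

Lemma ln_split3 (x a b c : R) : 0 <= x -> x <= a -> x <= b -> x <= c ->
  x * ln (a / (b * c)) = x * ln a - x * ln b - x * ln c.
Proof.
move=> x0 xa xb xc; have [->|xp] := eqVneq x 0; first by rewrite !mul0r; ring.
have xp' : 0 < x by rewrite lt_def xp.
have ap : 0 < a by apply: lt_le_trans xa.
have bp : 0 < b by apply: lt_le_trans xb.
have cp : 0 < c by apply: lt_le_trans xc.
rewrite ln_div ?posrE ?mulr_gt0 // lnM ?posrE //; ring.
Qed.

Lemma ln_split4 (x a b c d : R) : 0 <= x -> x <= a -> x <= b -> x <= c -> x <= d ->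
  x * ln (a * d / (b * c)) = x * ln a + x * ln d - x * ln b - x * ln c.
Proof.
move=> x0 xa xb xc xd; have [->|xp] := eqVneq x 0; first by rewrite !mul0r; ring.
have xp' : 0 < x by rewrite lt_def xp.
have ap : 0 < a by apply: lt_le_trans xa.
have bp : 0 < b by apply: lt_le_trans xb.
have cp : 0 < c by apply: lt_le_trans xc.
have dp : 0 < d by apply: lt_le_trans xd.
rewrite ln_div ?posrE ?mulr_gt0 // !lnM ?posrE //; ring.
Qed.

Lemma MI_Phi {A B : finType} f (gA : T -> A) (gB : T -> B) : (forall t, 0 <= f t) ->
  MI f gA gB = Phi f (fun s => (gA s, gB s)) - Phi f gA - Phi f gB.
Proof.
move=> f0; rewrite /MI -!sum_pm_ln.
rewrite (eq_bigr (fun t => f t * ln (pm f (fun s => (gA s, gB s)) t) - f t * ln (pm f gA t)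
   - f t * ln (pm f gB t))); first by rewrite !sumrB.
by move=> t _; rewrite ln_split3 // pm_ge.
Qed.

Lemma CMI_Phi {A B C : finType} f (gA : T -> A) (gB : T -> B) (gC : T -> C) :
  (forall t, 0 <= f t) ->
  CMI f gA gB gC = Phi f (fun s => (gA s, gB s, gC s)) + Phi f gC
     - Phi f (fun s => (gA s, gC s)) - Phi f (fun s => (gB s, gC s)).
Proof.
move=> f0; rewrite /CMI -!sum_pm_ln.
rewrite (eq_bigr (fun t => f t * ln (pm f (fun s => (gA s, gB s, gC s)) t) + f t * ln (pm f gC t)
   - f t * ln (pm f (fun s => (gA s, gC s)) t) - f t * ln (pm f (fun s => (gB s, gC s)) t)));
  first by rewrite !sumrB big_split.
by move=> t _; rewrite ln_split4 // pm_ge.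
Qed.
End Gen2.

Lemma key_ln {R : realType} (a y : R) : 0 < a -> 0 < y -> a - y <= a * ln (a / y).
Proof.
move=> a0 y0.
have h : ln (y / a) <= y / a - 1.
  have := @le_ln1Dx R (y / a - 1); rewrite [1 + _]addrC subrK; apply.
  by have := divr_gt0 y0 a0; lra.
have -> : ln (a / y) = - ln (y / a).
  by rewrite !ln_div ?posrE // opprB.
have e : a * (y / a) = y by field; rewrite gt_eqF.
rewrite mulrN lerNr opprB; apply: (le_trans (ler_wpM2l (ltW a0) h)).
by rewrite mulrBr e mulr1.
Qed.

Section Emin.
Context {R : realType} {X1 X2 Y : finType}.
Notation T := (X1 * X2 * Y)%type.
Lemma emin_ge (S : set (T -> R)) F (c : R) :
  (forall f, S f -> c <= F f) -> (c%:E <= emin S F)%E.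
Proof. by move=> h; apply/ereal_infP => _ [f Sf <-]; rewrite lee_fin h. Qed.
Lemma emin_le (S : set (T -> R)) F f : S f -> (emin S F <= (F f)%:E)%E.
Proof. by move=> Sf; apply: ge_ereal_inf; exists (F f)%:E => //; exists f. Qed.
End Emin.

Section Chan.
Context {R : realType} {X1 X2 Y : finType} (W : X1 -> X2 -> Y -> R) (HW : is_channel W).
Notation T := (X1 * X2 * Y)%type.
Definition Wt (t : T) := W t.1.1 t.1.2 t.2.

Lemma Wt_ge0 t : 0 <= Wt t. Proof. by case: HW => h _; apply: h. Qed.

Lemma joint_ge0 PX : (forall x, 0 <= PX x) -> forall t, 0 <= joint PX W t.
Proof. by move=> h t; rewrite /joint mulr_ge0 //; case: HW => h' _; apply: h'. Qed.

Lemma sum_pair (F : (X1 * X2)%type -> Y -> R) :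
  \sum_(t : T) F t.1 t.2 = \sum_x \sum_y F x y.
Proof. by rewrite pair_big; apply: eq_bigl => -[]. Qed.

Lemma marg12 (F : T -> R) x :
  marg F px12 x = \sum_y F (x, y).
Proof.
have e : \sum_(i | i == x) \sum_(j : Y) F (i, j) =
    \sum_(p : T | (p.1 == x) && true) F (p.1, p.2) by rewrite pair_big.
rewrite big_pred1_eq in e; rewrite e; apply: eq_big => [[a b]|[a b] _] //=.
by rewrite andbT.
Qed.

Lemma joint_marg12 PX x : marg (joint PX W) px12 x = PX x.
Proof.
rewrite marg12 /joint /= -mulr_sumr.
by case: HW => _ ->; rewrite mulr1.
Qed.

Lemma joint_dist PX : is_dist PX -> is_dist (joint PX W).
Proof.
case=> h0 h1; split; first exact: joint_ge0.
rewrite (partition_big px12 xpredT) //=.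
rewrite -[RHS]h1; apply: eq_bigr => x _.
by rewrite -(joint_marg12 PX x).
Qed.

Lemma pm_id (f : T -> R) t : pm f (fun s => s) t = f t.
Proof. by rewrite /pm /marg big_pred1_eq. Qed.

Lemma Eq_sum (f : T -> R) : (forall t, f t != 0 -> 0 < Wt t) ->
  Eq W f = (\sum_t f t * ln (Wt t))%:E.
Proof.
move=> h; rewrite /Eq -sumEFin; apply: eq_bigr => t _.
case: eqP => [->|/eqP ne]; first by rewrite mul0r.
by rewrite /qmatch -/(Wt t) (h t ne) EFinM.
Qed.

Lemma joint_supp PX : (forall x, 0 <= PX x) ->
  forall t, joint PX W t != 0 -> 0 < Wt t.
Proof.
move=> h t; rewrite /joint mulf_eq0 negb_or => /andP[_ ne].
by rewrite lt_def ne Wt_ge0.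
Qed.

Lemma Eq_fin (f : T -> R) (c : R) : (forall t, 0 <= f t) -> (c%:E <= Eq W f)%E ->
  forall t, f t != 0 -> 0 < Wt t.
Proof.
move=> f0 hc t ft; have [//|Wle] := ltP 0 (Wt t).
have fp : 0 < f t by rewrite lt_def ft f0.
suff : Eq W f = -oo%E by move=> e; move: hc; rewrite e leeNy_eq.
rewrite /Eq (bigD1 t) //= ifN // /qmatch -/(Wt t) ifN; last by rewrite -leNgt.
by rewrite mulrNy gtr0_sg // mul1e addNye.
Qed.

Lemma sum_W_marg (f : T -> R) : is_dist f -> \sum_t Wt t * pm f px12 t = 1.
Proof.
case=> f0 f1; rewrite /pm /Wt.
rewrite (sum_pair (fun x y => W x.1 x.2 y * marg f px12 x)).
transitivity (\sum_x marg f px12 x).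
  apply: eq_bigr => x _; rewrite -mulr_suml.
  by case: HW => _ ->; rewrite mul1r.
by rewrite -f1 [RHS](partition_big px12 xpredT).
Qed.

Lemma gibbs_f (f : T -> R) : is_dist f -> (forall t, f t != 0 -> 0 < Wt t) ->
  \sum_t f t * ln (Wt t) <= Phi f (fun s => s) - Phi f px12.
Proof.
move=> fd hs; have f0 := fd.1.
rewrite -!sum_pm_ln.
apply: (@le_trans _ _ (\sum_t (f t * ln (pm f (fun s => s) t) - f t * ln (pm f px12 t)
    + (Wt t * pm f px12 t - f t)))).
  apply: ler_sum => t _; rewrite pm_id.
  have [->|ne] := eqVneq (f t) 0.
    by rewrite !mul0r !subrr add0r subr0 mulr_ge0 // ?Wt_ge0 // (le_trans (f0 t)) // pm_ge.
  have a0 : 0 < f t by rewrite lt_def ne f0.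
  have w0 := hs t ne.
  have m0 : 0 < pm f px12 t by apply: lt_le_trans a0 (pm_ge _ _ f0).
  have := key_ln a0 (mulr_gt0 w0 m0).
  rewrite ln_div ?posrE ?mulr_gt0 // lnM ?posrE //.
  move=> h; have e : f t * (ln (f t) - (ln (Wt t) + ln (pm f px12 t))) =
    f t * ln (f t) - f t * ln (Wt t) - f t * ln (pm f px12 t) by ring.
  rewrite e in h; lra.
by rewrite big_split /= sumrB [X in _ + X]sumrB sum_W_marg // fd.2 subrr addr0.
Qed.

Lemma gibbs_P PX : is_dist PX ->
  \sum_t joint PX W t * ln (Wt t) = Phi (joint PX W) (fun s => s) - Phi (joint PX W) px12.
Proof.
move=> [p0 p1]; rewrite -!sum_pm_ln -sumrB; apply: eq_bigr => t _.
rewrite pm_id /pm joint_marg12.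
have [->|ne] := eqVneq (joint PX W t) 0; first by rewrite !mul0r subrr.
have w0 := joint_supp p0 ne.
move: ne; rewrite /joint mulf_eq0 negb_or => /andP[ne _].
have x0 : 0 < PX t.1 by rewrite lt_def ne p0.
rewrite lnM ?posrE // -/(Wt t); ring.
Qed.

Lemma gibbs PX f : is_dist PX -> Gq W (joint PX W) f ->
  Phi (joint PX W) (fun s => s) - Phi (joint PX W) px12 <= Phi f (fun s => s) - Phi f px12.
Proof.
move=> pd [fd [_ hE]].
have sP := joint_supp pd.1.
rewrite (Eq_sum sP) in hE.
have sf := Eq_fin fd.1 hE.
rewrite (Eq_sum sf) lee_fin in hE.
by rewrite -gibbs_P //; apply: (le_trans hE); apply: gibbs_f.
Qed.

End Chan.

Section LogSum.
Context {R : realType}.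

Lemma logsum {I : finType} (P : pred I) (a b : I -> R) :
  (forall i, P i -> 0 <= a i) -> (forall i, P i -> 0 <= b i) ->
  (forall i, P i -> 0 < a i -> 0 < b i) ->
  (\sum_(i | P i) a i) * ln ((\sum_(i | P i) a i) / \sum_(i | P i) b i)
    <= \sum_(i | P i) a i * ln (a i / b i).
Proof.
move=> a0 b0 ab.
set A := \sum_(i | P i) a i; set B := \sum_(i | P i) b i.
have A0 : 0 <= A by apply: sumr_ge0.
have [Ae|Ane] := eqVneq A 0.
  have az := psumr_eq0P a0 Ae.
  rewrite Ae mul0r big1 // => i Pi; by rewrite az // mul0r.
have Ap : 0 < A by rewrite lt_def Ane A0.
have [i [Pi ai]] : exists i, P i /\ 0 < a i.
  apply: contrapT => hn; move: Ap; rewrite /A big1 ?ltxx // => i Pi.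
  apply/eqP; rewrite eq_le a0 // andbT leNgt; apply/negP => h; apply: hn; exists i; split => //.
have Bp : 0 < B.
  apply: (lt_le_trans (ab _ Pi ai)); rewrite /B (bigD1 i) //= lerDl.
  by apply: sumr_ge0 => j /andP[Pj _]; apply: b0.
have c0 : 0 < A / B by apply: divr_gt0.
have e0 : \sum_(i | P i) (a i - b i * (A / B)) = 0.
  rewrite sumrB -mulr_suml -/A -/B; field; by rewrite gt_eqF.
rewrite -subr_ge0 mulr_suml -sumrB -[X in X <= _]e0.
apply: ler_sum => j Pj.
have [aj0|ajn] := eqVneq (a j) 0.
  by rewrite aj0 !mul0r subr0 sub0r oppr_le0 mulr_ge0 // ?b0 // ltW.
have ajp : 0 < a j by rewrite lt_def ajn a0.
have bjp := ab _ Pj ajp.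
have := key_ln ajp (mulr_gt0 bjp c0).
rewrite !ln_div ?posrE ?mulr_gt0 ?invr_gt0 // lnM ?posrE // ln_div ?posrE //.
move=> h; apply: (le_trans h); rewrite le_eqVlt; apply/orP; left; apply/eqP; ring.
Qed.

Definition Msum {U V : finType} (m : U -> R) (h : U -> V) (v : V) :=
  \sum_(u | h u == v) m u.

Lemma Msum_ge {U V : finType} (m : U -> R) (h : U -> V) u :
  (forall u, 0 <= m u) -> m u <= Msum m h (h u).
Proof.
move=> m0; rewrite /Msum (bigD1 u) //= lerDl.
by apply: sumr_ge0 => s _.
Qed.

Lemma Dh_eq {U V : finType} (m : U -> R) (h : U -> V) : (forall u, 0 <= m u) ->
  \sum_u phi (m u) - \sum_v phi (Msum m h v) = \sum_u m u * ln (m u / Msum m h (h u)).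
Proof.
move=> m0.
have -> : \sum_v phi (Msum m h v) = \sum_u m u * ln (Msum m h (h u)).
  rewrite [RHS](partition_big h xpredT) //=; apply: eq_bigr => v _.
  rewrite /phi {1}/Msum big_distrl /=; apply: eq_big => // u /eqP -> //.
rewrite -sumrB; apply: eq_bigr => u _.
have [->|ne] := eqVneq (m u) 0; first by rewrite /phi !mul0r subrr.
have mp : 0 < m u by rewrite lt_def ne m0.
have Mp : 0 < Msum m h (h u) by apply: lt_le_trans mp (Msum_ge h u m0).
by rewrite /phi ln_div ?posrE // mulrBr.
Qed.

Definition Dh {U V : finType} (m : U -> R) (h : U -> V) :=
  \sum_u phi (m u) - \sum_v phi (Msum m h v).

Lemma DhE {U V : finType} (m : U -> R) (h : U -> V) : (forall u, 0 <= m u) ->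
  Dh m h = \sum_u m u * ln (m u / Msum m h (h u)).
Proof. exact: Dh_eq. Qed.

Lemma Dh_convex {U V : finType} n (w : 'I_n -> R) (ms : 'I_n -> U -> R) (h : U -> V) :
  (forall i, 0 <= w i) -> (forall i u, 0 <= ms i u) ->
  Dh (fun u => \sum_i w i * ms i u) h <= \sum_i w i * Dh (ms i) h.
Proof.
move=> w0 m0.
have mm0 : forall u, 0 <= \sum_i w i * ms i u.
  by move=> u; apply: sumr_ge0 => i _; apply: mulr_ge0.
rewrite (DhE h mm0).
rewrite (eq_bigr (fun i => \sum_u w i * (ms i u * ln (ms i u / Msum (ms i) h (h u))))); last first.
  by move=> i _; rewrite DhE // mulr_sumr.
rewrite exchange_big /=; apply: ler_sum => u _.
have eM : Msum (fun u => \sum_i w i * ms i u) h (h u) = \sum_i w i * Msum (ms i) h (h u).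
  rewrite /Msum exchange_big /=; apply: eq_bigr => i _; by rewrite mulr_sumr.
rewrite eM.
have L := @logsum _ (fun _ => true) (fun i => w i * ms i u) (fun i => w i * Msum (ms i) h (h u)).
apply: (le_trans (L _ _ _)).
- by move=> i _; apply: mulr_ge0.
- by move=> i _; apply: mulr_ge0 => //; apply: sumr_ge0.
- move=> i _ /= p; have wp : 0 < w i.
    rewrite lt_def w0 andbT; apply/eqP => e; by move: p; rewrite e mul0r ltxx.
  have mp : 0 < ms i u by move: p; rewrite pmulr_rgt0.
  by rewrite mulr_gt0 // (lt_le_trans mp) // Msum_ge.
- apply: ler_sum => i _.
  have [->|wn] := eqVneq (w i) 0; first by rewrite !mul0r.
  rewrite -mulf_div divff // mul1r mulrA //.
Qed.

End LogSum.

Section CMIu.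
Context {R : realType} {A B C : finType}.
Notation U := (A * B * C)%type.
Variable m : U -> R.
Hypothesis m0 : forall u, 0 <= m u.

Definition hAC (u : U) := (u.1.1, u.2).
Definition hBC (u : U) := (u.1.2, u.2).
Definition hC (u : U) := u.2.

Lemma Msum_comp {V1 V2 : finType} (m' : U -> R) (h : U -> V1) (h' : V1 -> V2) v :
  Msum (Msum m' h) h' v = Msum m' (fun u => h' (h u)) v.
Proof.
rewrite /Msum [RHS](partition_big h (fun v1 => h' v1 == v)) /=; last by [].
apply: eq_bigr => v1 hv; apply: eq_bigl => u.
by case: (eqVneq (h u) v1) => [->|]; rewrite ?andbT ?andbF.
Qed.

Lemma sum_slice (v : A * C) :
  \sum_(u | hAC u == v) Msum m hBC (hBC u) = Msum m hC v.2.
Proof.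
rewrite /Msum.
transitivity (\sum_u \sum_u' (if (hAC u == v) && (hBC u' == hBC u) then m u' else 0)).
  rewrite big_mkcond; apply: eq_bigr => u _; case: (hAC u == v) => /=; first by rewrite big_mkcond.
  by rewrite big1.
rewrite exchange_big [RHS]big_mkcond /=; apply: eq_bigr => u' _.
case: v => a c /=.
have [e|ne] := eqVneq (hC u') c.
  rewrite (bigD1 ((a, u'.1.2), c)) //=.
  rewrite /hAC /hBC /=; rewrite /hC in e; rewrite e !eqxx /= big1 ?addr0 //.
  move=> [[x y] z] /= ne'; case: ifP => // /andP[/eqP [hx hz] /eqP [hy _]].
  by move: ne'; rewrite hx hz hy /hC eqxx.
apply: big1 => [[[x y] z]] _; case: ifP => // /andP[/eqP [hx hz] /eqP [hy hz']].
by move: ne; rewrite /hC hz' hz eqxx.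
Qed.

Lemma cmi_u_ge0 :
  0 <= \sum_u phi (m u) + \sum_c phi (Msum m hC c)
       - \sum_v phi (Msum m hAC v) - \sum_v phi (Msum m hBC v).
Proof.
have e1 : \sum_c phi (Msum m hC c) = \sum_c phi (Msum (Msum m hAC) snd c).
  by apply: eq_bigr => c _; rewrite Msum_comp.
have mAC0 : forall v, 0 <= Msum m hAC v by move=> v; apply: sumr_ge0.
have -> : \sum_u phi (m u) + \sum_c phi (Msum m hC c) - \sum_v phi (Msum m hAC v)
   - \sum_v phi (Msum m hBC v) = Dh m hBC - Dh (Msum m hAC) snd.
  by rewrite /Dh e1; ring.
rewrite subr_ge0 !DhE //.
rewrite [X in _ <= X](partition_big hAC xpredT) //=.
apply: ler_sum => v _.
have L := @logsum _ _ (fun u => hAC u == v) m (fun u => Msum m hBC (hBC u)).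
rewrite sum_slice in L.
rewrite Msum_comp.
apply: le_trans (L _ _ _).
- exact: lexx.
- by move=> u _.
- by move=> u _; apply: sumr_ge0.
- by move=> u _ p; apply: lt_le_trans p (Msum_ge _ _ m0).
Qed.

End CMIu.

Ltac peq := move=> [[? ?] ?] [[? ?] ?]; unfold px12, py, px1, px2; rewrite /= ?xpair_eqE ?eqxx ?andbT;
  repeat match goal with |- context [?x == ?y] => case: (x == y) end; done.

Section GenF.
Context {R : realType} {T : finType}.
Lemma cmi_f_ge0 {A B C : finType} (f : T -> R) (gA : T -> A) (gB : T -> B) (gC : T -> C) :
  (forall t, 0 <= f t) ->
  0 <= Phi f (fun s => (gA s, gB s, gC s)) + Phi f gC
     - Phi f (fun s => (gA s, gC s)) - Phi f (fun s => (gB s, gC s)).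
Proof.
move=> f0.
set g := fun s => (gA s, gB s, gC s).
have m0 : forall u, 0 <= marg f g u by move=> u; apply: marg_ge0.
have := cmi_u_ge0 m0.
have e : forall (V : finType) (h : A * B * C -> V),
   \sum_v phi (Msum (marg f g) h v) = Phi f (fun t => h (g t)).
  by move=> V h; rewrite /Phi; apply: eq_bigr => v _; rewrite marg_comp.
by rewrite !e.
Qed.

Lemma Phi_unit (f : T -> R) : \sum_t f t = 1 -> Phi f (fun _ => tt) = 0.
Proof.
move=> h; rewrite /Phi (eq_bigl (pred1 tt)); last by case.
rewrite big_pred1_eq /marg (eq_bigl xpredT) //= h /phi ln1 mulr0 //.
Qed.
End GenF.

Section PerP.
Context {R : realType} {X1 X2 Y : finType} (W : X1 -> X2 -> Y -> R) (HW : is_channel W).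
Notation T := (X1 * X2 * Y)%type.
Implicit Types f : T -> R.

Definition H0 f := Phi f (fun s : T => s).
Definition H12 f := Phi f px12.
Definition H1 f := Phi f (@px1 X1 X2 Y).
Definition H2 f := Phi f (@px2 X1 X2 Y).
Definition HY f := Phi f (@py X1 X2 Y).
Definition H1Y f := Phi f (fun t : T => (px1 t, py t)).
Definition H2Y f := Phi f (fun t : T => (px2 t, py t)).

Section F.
Variable f : T -> R.
Hypothesis f0 : forall t, 0 <= f t.

Lemma MI12Y : MI f px12 py = H0 f - H12 f - HY f.
Proof.
rewrite MI_Phi // /H0 (Phi_equiv f (g := fun s => (px12 s, py s)) (g' := fun s => s)) //; try peq.
Qed.

Lemma CMI21 : CMI f px2 py px1 = H0 f + H1 f - H12 f - H1Y f.
Proof.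
rewrite CMI_Phi // /H0 /H12 /H1Y.
rewrite (Phi_equiv f (g := fun s => (px2 s, py s, px1 s)) (g' := fun s => s)); last by peq.
rewrite (Phi_equiv f (g := fun s => (px2 s, px1 s)) (g' := px12)); last by peq.
rewrite (Phi_equiv f (g := fun s => (py s, px1 s)) (g' := fun t => (px1 t, py t))) //; try peq.
Qed.

Lemma MI1Y : MI f px1 py = H1Y f - H1 f - HY f.
Proof. by rewrite MI_Phi. Qed.

Lemma MI1Y2 : MI f px1 (fun t => (py t, px2 t)) = H0 f - H1 f - H2Y f.
Proof.
rewrite MI_Phi // /H0 /H2Y.
rewrite (Phi_equiv f (g := fun s => (px1 s, (py s, px2 s))) (g' := fun s => s)); last by peq.
rewrite (Phi_equiv f (g := fun s => (py s, px2 s)) (g' := fun t => (px2 t, py t))) //; try peq.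
Qed.

Lemma MI2Y : MI f px2 py = H2Y f - H2 f - HY f.
Proof. by rewrite MI_Phi. Qed.

Lemma MI21 : MI f px2 px1 = H12 f - H2 f - H1 f.
Proof.
rewrite MI_Phi // /H12.
rewrite (Phi_equiv f (g := fun s => (px2 s, px1 s)) (g' := px12)) //; try peq.
Qed.

Lemma NN_A : 0 <= H0 f + HY f - H1Y f - H2Y f.
Proof.
have := cmi_f_ge0 px1 px2 py f0.
rewrite /H0 (Phi_equiv f (g := fun s => (px1 s, px2 s, py s)) (g' := fun s => s)) //; try peq.
Qed.

Lemma NN_B : \sum_t f t = 1 -> 0 <= H0 f - H1 f - H2Y f.
Proof.
move=> f1; have := cmi_f_ge0 px1 (fun t => (py t, px2 t)) (fun _ => tt) f0.
rewrite Phi_unit // /H0 /H1 /H2Y.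
rewrite (Phi_equiv f (g := fun s => (px1 s, (py s, px2 s), tt)) (g' := fun s => s)); last by peq.
rewrite (Phi_equiv f (g := fun s => (px1 s, tt)) (g' := px1)); last by peq.
rewrite (Phi_equiv f (g := fun s => (py s, px2 s, tt)) (g' := fun t => (px2 t, py t))); last by peq.
by rewrite addr0.
Qed.
End F.

Lemma marg12_eq f f' : marg f px12 = marg f' px12 ->
  [/\ H12 f = H12 f', H1 f = H1 f' & H2 f = H2 f'].
Proof.
move=> e; split; first exact: Phi_marg.
  by apply: Phi_marg; apply: (marg_comp_eq (h := fst)) e.
by apply: Phi_marg; apply: (marg_comp_eq (h := snd)) e.
Qed.

End PerP.

Section Sets.
Context {R : realType} {X1 X2 Y : finType} (W : X1 -> X2 -> Y -> R) (HW : is_channel W).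
Notation T := (X1 * X2 * Y)%type.
Variable PX : (X1 * X2)%type -> R.
Hypothesis pd : is_dist PX.
Let P := joint PX W.
Let P0 : forall t, 0 <= P t := (joint_dist HW pd).1.

Lemma P_Gq : Gq W P P.
Proof. by split; [exact: joint_dist | split]. Qed.

Lemma Gq_facts f : Gq W P f ->
  [/\ forall t, 0 <= f t, H0 P - H12 P <= H0 f - H12 f,
      H12 f = H12 P, H1 f = H1 P & H2 f = H2 P].
Proof.
move=> hG; have := gibbs HW pd hG => hg.
case: hG => fd [hm _].
by case: (marg12_eq hm) => e1 e2 e3; split => //; apply: fd.1.
Qed.

Definition Cp := CMI P px2 py px1.
Definition Mp := MI P px12 py.

Lemma lb_L2 f : L2 W P f -> Cp <= CMI f px2 py px1.
Proof.
move=> [hG hm]; case: (Gq_facts hG) => f0 hg e12 e1 e2.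
have e : H1Y f = H1Y P by apply: Phi_marg.
rewrite /Cp !CMI21 //; lra.
Qed.

Lemma lb_L1 f : L1 W P f -> MI P px1 (fun t => (py t, px2 t)) <= MI f px1 (fun t => (py t, px2 t)).
Proof.
move=> [hG hm]; case: (Gq_facts hG) => f0 hg e12 e1 e2.
have e : H2Y f = H2Y P by apply: Phi_marg.
rewrite !MI1Y2 //; lra.
Qed.

Lemma lb_L0 f : L0 W P f -> Mp <= MI f px12 py.
Proof.
move=> [hG hm]; case: (Gq_facts hG) => f0 hg e12 e1 e2.
have e : HY f = HY P by apply: Phi_marg.
rewrite /Mp !MI12Y //; lra.
Qed.

Lemma lb_R1'' f s : L0 W P f -> Mp - s <= MI f px1 py + Num.max 0 (CMI f px2 py px1 - s).
Proof.
move=> hf; have hl := lb_L0 hf; case: hf => [hG hm]; case: (Gq_facts hG) => f0 hg e12 e1 e2.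
have hmx : CMI f px2 py px1 - s <= Num.max 0 (CMI f px2 py px1 - s) by rewrite le_max lexx orbT.
have eY : HY f = HY P by apply: Phi_marg.
rewrite /Mp MI12Y // MI1Y // CMI21 //; rewrite CMI21 // in hmx; lra.
Qed.

Lemma lb_R2'' f s : L0 W P f -> Mp - s <=
  MI f px2 py - MI f px2 px1 + Num.max 0 (MI f px1 (fun t => (py t, px2 t)) - s).
Proof.
move=> hf; have hl := lb_L0 hf; case: hf => [hG hm]; case: (Gq_facts hG) => f0 hg e12 e1 e2.
set z := MI f px1 _.
have hmx : z - s <= Num.max 0 (z - s) by rewrite le_max lexx orbT.
have eY : HY f = HY P by apply: Phi_marg.
rewrite /z MI1Y2 // in hmx.
rewrite /z /Mp MI12Y // MI2Y // MI21 // MI1Y2 //; lra.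
Qed.

Definition Rm : set (R * R) := [set r | 0 <= r.1 /\ 0 <= r.2 /\ r.2 <= Cp /\ r.1 + r.2 <= Mp].

Lemma P_L0 : L0 W P P. Proof. by split => //; exact: P_Gq. Qed.
Lemma P_L1 : L1 W P P. Proof. by split => //; exact: P_Gq. Qed.
Lemma P_L2 : L2 W P P. Proof. by split => //; exact: P_Gq. Qed.

Lemma ub (S : set (T -> R)) F (x : R) f : S f -> (x%:E <= emin S F)%E -> x <= F f.
Proof. by move=> Sf h; rewrite -lee_fin (le_trans h) // emin_le. Qed.

Lemma Mp_split : Mp = MI P px1 py + Cp.
Proof. by rewrite /Mp /Cp MI12Y // MI1Y // CMI21 //; ring. Qed.

Lemma sup_eq : Rsup_tilde W P = Rm.
Proof.
apply/seteqP; split => r.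
  move=> [r10 [r20 [h2 h12]]]; split => //; split => //.
  have c2 := ub P_L2 h2; split => //.
  have [hl|hl] := leP (MI P px1 py) r.1.
    by apply: (ub _ h12); split => //; exact: P_L0.
  rewrite Mp_split /Cp; lra.
move=> [r10 [r20 [h2 h12]]]; split => //; split => //; split.
  apply: emin_ge => f hf; apply: le_trans h2 (lb_L2 hf).
apply: emin_ge => f [hf _]; apply: le_trans h12 (lb_L0 hf).
Qed.

Lemma IP1 : 0 <= MI P px1 (fun t => (py t, px2 t)).
Proof. rewrite MI1Y2 //; apply: NN_B => //; exact: (joint_dist HW pd).2. Qed.

Lemma IP2 : MI P px1 py <= MI P px1 (fun t => (py t, px2 t)).
Proof. have := NN_A P0; rewrite MI1Y2 // MI1Y //; lra. Qed.

Lemma bin_eq : Rbin_star W P = Rm.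
Proof.
apply/seteqP; split => r.
  move=> [r1a [r1b [ha [hb [r20 [e1 [h1 [h2 h3]]]]]]]].
  have c1 := ub P_L1 h1; have c2 := ub P_L2 h2.
  split; first by rewrite e1 addr_ge0.
  split => //; split; first by rewrite /Cp; lra.
  rewrite e1; case: h3 => h3.
    have := ub P_L0 h3.
    have -> : Num.max 0 (CMI P px2 py px1 - (r1b + r.2)) = Cp - (r1b + r.2).
      by apply/eqP; rewrite eq_le ge_max le_max lexx orbT /Cp andbT; lra.
    rewrite Mp_split; lra.
  have := ub P_L0 h3.
  have -> : Num.max 0 (MI P px1 (fun t => (py t, px2 t)) - r1a) =
     MI P px1 (fun t => (py t, px2 t)) - r1a.
    by apply/eqP; rewrite eq_le ge_max le_max lexx orbT andbT; lra.
  rewrite /Mp MI12Y // MI2Y // MI21 // MI1Y2 //; lra.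
move=> [r10 [r20 [h2 h12]]].
set r1a := Num.max 0 (r.1 + r.2 - Cp).
have ha1 : 0 <= r1a by rewrite le_max lexx.
have ha2 : r.1 + r.2 - Cp <= r1a by rewrite le_max lexx orbT.
have ha3 : r1a <= r.1 by rewrite ge_max r10 /=; lra.
have ha4 : r1a = 0 \/ r1a = r.1 + r.2 - Cp.
  by rewrite /r1a; case: (leP 0 (r.1 + r.2 - Cp)) => h; [right|left].
exists r1a, (r.1 - r1a); split => //; split; first lra.
split => //; split; first ring.
have I1 := IP1; have I2 := IP2; have Ms := Mp_split.
split.
  apply: emin_ge => f hf; apply: le_trans (lb_L1 hf).
  case: ha4 => ->; lra.
split.
  apply: emin_ge => f hf; apply: le_trans (lb_L2 hf).
  lra.
left; apply: emin_ge => f hf; apply: le_trans (lb_R1'' _ hf); lra.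
Qed.

End Sets.

Section Conv.
Context {R : realType} {X1 X2 Y : finType} (W : X1 -> X2 -> Y -> R) (HW : is_channel W).
Notation T := (X1 * X2 * Y)%type.

Lemma Dh_Phi {U V : finType} (f : T -> R) (g : T -> U) (h : U -> V) :
  Dh (marg f g) h = Phi f g - Phi f (fun t => h (g t)).
Proof.
rewrite /Dh; congr (_ - _); rewrite /Phi; apply: eq_bigr => v _.
by rewrite marg_comp.
Qed.

Lemma Cp_form PX : is_dist PX -> Cp W PX =
  \sum_t joint PX W t * ln (Wt W t) - Dh (marg (joint PX W) (fun t => (px1 t, py t))) fst.
Proof.
move=> pd; have P0 := (joint_dist HW pd).1.
rewrite /Cp CMI21 // gibbs_P // Dh_Phi /H0 /H1 /H12 /H1Y; ring.
Qed.

Lemma Mp_form PX : is_dist PX -> Mp W PX =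
  \sum_t joint PX W t * ln (Wt W t) - Dh (marg (joint PX W) py) (fun _ => tt).
Proof.
move=> pd; have P0 := (joint_dist HW pd).1.
rewrite /Mp MI12Y // gibbs_P // Dh_Phi Phi_unit; last exact: (joint_dist HW pd).2.
rewrite /H0 /H12 /HY; ring.
Qed.

Variable n : nat.
Variable w : 'I_n -> R.
Variable PXs : 'I_n -> (X1 * X2)%type -> R.
Hypothesis w0 : forall i, 0 <= w i.
Hypothesis w1 : \sum_i w i = 1.
Hypothesis pds : forall i, is_dist (PXs i).
Let PXm := fun x => \sum_i w i * PXs i x.

Lemma mix_dist : is_dist PXm.
Proof.
split; first by move=> x; apply: sumr_ge0 => i _; rewrite mulr_ge0 // (pds i).1.
rewrite /PXm exchange_big /= -[RHS]w1; apply: eq_bigr => i _.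
by rewrite -mulr_sumr (pds i).2 mulr1.
Qed.

Lemma joint_mix t : joint PXm W t = \sum_i w i * joint (PXs i) W t.
Proof. by rewrite /joint /PXm mulr_suml; apply: eq_bigr => i _; rewrite mulrA. Qed.

Lemma marg_mix {U : finType} (g : T -> U) u :
  marg (joint PXm W) g u = \sum_i w i * marg (joint (PXs i) W) g u.
Proof.
rewrite /marg (eq_bigr _ (fun t _ => joint_mix t)) exchange_big /=.
by apply: eq_bigr => i _; rewrite mulr_sumr.
Qed.

Lemma lin_mix : \sum_t joint PXm W t * ln (Wt W t) =
  \sum_i w i * \sum_t joint (PXs i) W t * ln (Wt W t).
Proof.
rewrite (eq_bigr _ (fun t _ => congr1 (fun x => x * ln (Wt W t)) (joint_mix t))).
rewrite (eq_bigr (fun t => \sum_i w i * (joint (PXs i) W t * ln (Wt W t)))); last first.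
  by move=> t _; rewrite mulr_suml; apply: eq_bigr => i _; rewrite mulrA.
by rewrite exchange_big /=; apply: eq_bigr => i _; rewrite mulr_sumr.
Qed.

Lemma Dh_mix {U V : finType} (g : T -> U) (h : U -> V) :
  Dh (marg (joint PXm W) g) h <= \sum_i w i * Dh (marg (joint (PXs i) W) g) h.
Proof.
have -> : marg (joint PXm W) g = fun u => \sum_i w i * marg (joint (PXs i) W) g u.
  by apply: funext => u; rewrite marg_mix.
apply: Dh_convex => // i u; apply: marg_ge0; exact: (joint_dist HW (pds i)).1.
Qed.

Lemma Cp_conc : \sum_i w i * Cp W (PXs i) <= Cp W PXm.
Proof.
rewrite Cp_form; last exact: mix_dist.
rewrite (eq_bigr _ (fun i _ => congr1 (fun x => w i * x) (Cp_form (pds i)))).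
under eq_bigr do rewrite mulrBr.
by rewrite sumrB lin_mix lerB // Dh_mix.
Qed.

Lemma Mp_conc : \sum_i w i * Mp W (PXs i) <= Mp W PXm.
Proof.
rewrite Mp_form; last exact: mix_dist.
rewrite (eq_bigr _ (fun i _ => congr1 (fun x => w i * x) (Mp_form (pds i)))).
under eq_bigr do rewrite mulrBr.
by rewrite sumrB lin_mix lerB // Dh_mix.
Qed.

End Conv.

Section Main.
Context {R : realType} {X1 X2 Y : finType} (W : X1 -> X2 -> Y -> R) (HW : is_channel W).
Hypothesis Rmatch_closed : closed (Rmatch W).

Lemma union_sup : [set r | exists PX, is_dist PX /\ Rsup_tilde W (joint PX W) r] = Rmatch W.
Proof.
apply/seteqP; split => r [PX [pd h]]; exists PX; split => //.
  by rewrite (sup_eq HW pd) in h.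
by rewrite (sup_eq HW pd).
Qed.

Lemma union_bin : [set r | exists PX, is_dist PX /\ Rbin_star W (joint PX W) r] = Rmatch W.
Proof.
apply/seteqP; split => r [PX [pd h]]; exists PX; split => //.
  by rewrite (bin_eq HW pd) in h.
by rewrite (bin_eq HW pd).
Qed.

Lemma conv_Rmatch : conv2 (Rmatch W) = Rmatch W.
Proof.
apply/seteqP; split.
  move=> p [n [w [z [w0 [w1 [hz ->]]]]]].
  have /choice [PXs hP] := hz.
  have pds : forall i, is_dist (PXs i) by move=> i; case: (hP i).
  exists (fun x => \sum_i w i * PXs i x); split; first exact: mix_dist.
  have hz1 : forall i, 0 <= (z i).1 by move=> i; case: (hP i) => _ [].
  have hz2 : forall i, 0 <= (z i).2 by move=> i; case: (hP i) => _ [_ []].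
  have hC : forall i, (z i).2 <= Cp W (PXs i) by move=> i; case: (hP i) => _ [_ [_ []]].
  have hM : forall i, (z i).1 + (z i).2 <= Mp W (PXs i) by move=> i; case: (hP i) => _ [_ [_ [_]]].
  split; first by apply: sumr_ge0 => i _; apply: mulr_ge0.
  split; first by apply: sumr_ge0 => i _; apply: mulr_ge0.
  split.
    apply: le_trans (Cp_conc HW w0 w1 pds).
    by apply: ler_sum => i _; apply: ler_wpM2l.
  apply: le_trans (Mp_conc HW w0 w1 pds).
  rewrite /= -big_split /=; apply: ler_sum => i _; rewrite -mulrDr.
  by apply: ler_wpM2l.
move=> r hr; exists 1%N, (fun _ => 1), (fun _ => r); split => //.
split; first by rewrite big_ord1.
split => //; rewrite !big_ord1 !mul1r; by case: r {hr}.
Qed.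

Lemma main_eq : Rsup W = Rbin W /\ Rbin W = Rmatch W.
Proof.
rewrite /Rsup /Rbin union_sup union_bin conv_Rmatch.
by rewrite -(proj1 (closure_id _) Rmatch_closed).
Qed.
End Main.

Section PhiCont.
Context {R : realType}.

Lemma xlnx_small (t : R) : 0 < t -> t < 1 -> `|t * ln t| < 2 * Num.sqrt t.
Proof.
move=> t0 t1; set s := Num.sqrt t.
have s0 : 0 < s by rewrite sqrtr_gt0.
have ss : s * s = t by rewrite -expr2 sqr_sqrtr // ltW.
have lt0 : ln t <= 0 by apply: ln_le0; apply: ltW.
have hl : - ln s < s^-1.
  by rewrite -lnV ?posrE //; apply: ln_sublinear; rewrite invr_gt0.
have e : ln t = 2 * ln s by rewrite -ss lnM ?posrE //; ring.
rewrite ler0_norm; last by rewrite mulr_ge0_le0 // ltW.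
rewrite e.
have : s * s * (- ln s) < s * s * s^-1 by rewrite ltr_pM2l // mulr_gt0.
have -> : s * s * s^-1 = s by rewrite -mulrA divff ?mulr1 // gt_eqF.
rewrite ss => h; lra.
Qed.

Lemma phi_cont : continuous (@phi R).
Proof.
move=> x.
have [xn|xp|->] := ltgtP x 0.
- apply: near_cst_continuous; near=> y.
  rewrite /phi ln0 ?mulr0 //; apply: ltW; near: y.
  exact: lt_nbhsl.
- apply: continuousM; first exact: cvg_id.
  exact: continuous_ln.
- apply/cvgrPdist_lt => e e0.
  rewrite /phi mul0r.
  apply/nbhs_ballP; exists (Num.min 1 ((e / 2) ^+ 2)).
    by rewrite /= lt_min ltr01 exprn_gt0 // divr_gt0.
  move=> t; rewrite /ball /= sub0r normrN lt_min => /andP[ht1 ht2].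
  have [tle|tp] := leP t 0.
    by rewrite ln0 // mulr0 subr0 normr0.
  rewrite sub0r normrN.
  have ht1' : t < 1 by move: ht1; rewrite gtr0_norm.
  apply: lt_trans (xlnx_small tp ht1') _.
  have s0 : 0 <= Num.sqrt t by apply: sqrtr_ge0.
  have ss : Num.sqrt t * Num.sqrt t = t by rewrite -expr2 sqr_sqrtr // ltW.
  move: ht2; rewrite gtr0_norm // => ht2.
  have : Num.sqrt t * Num.sqrt t < (e / 2) * (e / 2) by rewrite ss -expr2.
  have e2 : 0 < e / 2 by rewrite divr_gt0.
  move=> h; nra.
Unshelve. all: by end_near.
Qed.
End PhiCont.

Section Closed.
Context {R : realType} {X1 X2 Y : finType} (W : X1 -> X2 -> Y -> R) (HW : is_channel W).
Notation T := (X1 * X2 * Y)%type.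
Notation XX := (X1 * X2)%type.
Notation Tf := {ptws XX -> R}.

Lemma cD (f g : Tf -> R) : continuous f -> continuous g -> continuous (fun x => f x + g x).
Proof. move=> hf hg x; exact: (@continuousD R R^o Tf f g x (hf x) (hg x)). Qed.
Lemma cB (f g : Tf -> R) : continuous f -> continuous g -> continuous (fun x => f x - g x).
Proof. move=> hf hg x; exact: (@continuousB R R^o Tf f g x (hf x) (hg x)). Qed.
Lemma cM (f g : Tf -> R) : continuous f -> continuous g -> continuous (fun x => f x * g x).
Proof. move=> hf hg x; exact: (@continuousM R Tf f g x (hf x) (hg x)). Qed.
Lemma cC (c : R) : continuous (fun _ : Tf => c).
Proof. move=> x; exact: (@cvg_cst _ c _ (nbhs x) (nbhs_filter x)). Qed.
Lemma cP (i : XX) : continuous (fun PX : Tf => PX i).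
Proof. exact: (@proj_continuous XX (fun _ => R) i). Qed.
Lemma cMax (f g : Tf -> R) : continuous f -> continuous g -> continuous (fun x => Num.max (f x) (g x)).
Proof. move=> hf hg x; exact: (@continuous_max R Tf f g x (hf x) (hg x)). Qed.
Lemma cPhi (f : Tf -> R) : continuous f -> continuous (fun x => phi (f x)).
Proof. move=> hf x; have := @continuous_comp Tf R R f phi x (hf x) (@phi_cont R (f x)). exact. Qed.

Lemma cont_sum {I : Type} (s : seq I) (P : pred I) (F : I -> Tf -> R) :
  (forall i, continuous (F i)) -> continuous (fun x => \sum_(i <- s | P i) F i x).
Proof.
move=> h; elim: s => [|a s IH].
  have -> : (fun x => \sum_(i <- [::] | P i) F i x) = fun _ => 0.
    by apply: funext => x; rewrite big_nil.
  exact: cC.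
have -> : (fun x => \sum_(i <- a :: s | P i) F i x) =
   fun x => (if P a then F a x else 0) + \sum_(i <- s | P i) F i x.
  by apply: funext => x; rewrite big_cons; case: (P a); rewrite ?add0r.
apply: cD => //.
by case: (P a); [apply: h | apply: cC].
Qed.

Lemma cont_marg {U : finType} (g : T -> U) u :
  continuous (fun PX : Tf => marg (joint PX W) g u).
Proof.
rewrite /marg /joint; apply: cont_sum => t.
by apply: cM; [apply: cP | apply: cC].
Qed.

Lemma cont_Phi {U : finType} (g : T -> U) :
  continuous (fun PX : Tf => Phi (joint PX W) g).
Proof. by rewrite /Phi; apply: cont_sum => u; apply: cPhi; apply: cont_marg. Qed.

Definition Cq (PX : Tf) := H0 (joint PX W) + H1 (joint PX W) - H12 (joint PX W) - H1Y (joint PX W).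
Definition Mq (PX : Tf) := H0 (joint PX W) - H12 (joint PX W) - HY (joint PX W).

Lemma cont_Cq : continuous Cq.
Proof.
rewrite /Cq /H0 /H1 /H12 /H1Y.
by apply: cB; [apply: cB; [apply: cD|]|]; apply: cont_Phi.
Qed.

Lemma cont_Mq : continuous Mq.
Proof.
rewrite /Mq /H0 /H12 /HY.
by apply: cB; [apply: cB|]; apply: cont_Phi.
Qed.

Lemma Cq_eq PX : is_dist PX -> Cp W PX = Cq PX.
Proof. by move=> pd; rewrite /Cp CMI21 //; exact: (joint_dist HW pd).1. Qed.
Lemma Mq_eq PX : is_dist PX -> Mp W PX = Mq PX.
Proof. by move=> pd; rewrite /Mp MI12Y //; exact: (joint_dist HW pd).1. Qed.

Lemma dist_compact : compact [set PX : Tf | is_dist PX].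
Proof.
have -> : [set PX : Tf | is_dist PX] =
   [set f : Tf | forall i, `[0, 1]%classic (f i)] `&` [set f : Tf | \sum_i f i = 1].
  apply/seteqP; split => f.
    move=> [f0 f1]; split => // i; rewrite /= in_itv /= f0 /= -f1.
    by rewrite (bigD1 i) //= lerDl; apply: sumr_ge0.
  by move=> [hb h1]; split => // i; have := hb i; rewrite /= in_itv /= => /andP[].
apply: compact_closedI.
  have := @tychonoff XX (fun _ => R) (fun _ => `[0, 1]%classic) (fun _ => @segment_compact R 0 1).
  exact.
have -> : [set f : Tf | \sum_i f i = 1] = (fun f : Tf => \sum_i f i) @^-1` [set x | x = 1].
  by [].
apply: preimage_closed; last exact: closed_eq.
by move=> f _; apply: cont_sum => i; exact: cP.
Qed.

End Closed.

Section ClosedMain.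
Context {R : realType} {X1 X2 Y : finType} (W : X1 -> X2 -> Y -> R) (HW : is_channel W).
Notation XX := (X1 * X2)%type.
Notation Tf := {ptws XX -> R}.

Lemma Rmatch_closed : closed (Rmatch W).
Proof.
move=> r hr; apply: contrapT => nr.
pose d := fun PX : Tf => Num.max (Num.max (- r.1) (- r.2))
   (Num.max (r.2 - Cq W PX) (r.1 + r.2 - Mq W PX)).
have cd : continuous d.
  apply: cMax; apply: cMax; try apply: cC.
    by apply: cB; [apply: cC | apply: cont_Cq].
  by apply: cB; [apply: cC | apply: cont_Mq].
have dpos : forall PX : Tf, is_dist PX -> 0 < d PX.
  move=> PX pd; rewrite ltNge; apply/negP => hle; apply: nr; exists PX; split => //.
  move: hle; rewrite /d !ge_max => /andP[/andP[h1 h2] /andP[h3 h4]].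
  have e1 := Cq_eq HW pd; have e2 := Mq_eq HW pd.
  rewrite /Cp in e1; rewrite /Mp in e2; rewrite e1 e2.
  split; first lra. split; first lra. split; lra.
pose K := d @` [set PX : Tf | is_dist PX].
have Kc : compact K.
  apply: continuous_compact; last exact: dist_compact.
  exact: continuous_subspaceT.
have Kcl : closed K by apply: compact_closed => //; exact: Rhausdorff.
have K0 : ~ K 0 by move=> [PX pd e]; have := dpos PX pd; rewrite e ltxx.
have : nbhs (0:R) (~` K) by apply: open_nbhs_nbhs; split => //; rewrite openC.
move=> /nbhs_ballP [e e0 he].
have de : forall PX : Tf, is_dist PX -> e <= d PX.
  move=> PX pd; rewrite leNgt; apply/negP => lt.
  apply: (he (d PX)); last by exists PX.
  by rewrite /ball /= sub0r normrN gtr0_norm // dpos.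
have e3 : 0 < e / 3 by rewrite divr_gt0.
have [r' [hr' hb]] := hr _ (nbhsx_ballx r (e / 3) e3).
case: hb => /=; rewrite /ball /= => b1 b2.
move: b1 b2; rewrite !ltr_norml => /andP[b1 b1'] /andP[b2 b2'].
case: hr' => PX [pd [h1 [h2 [h3 h4]]]].
have := de PX pd; rewrite /d.
have e1 := Cq_eq HW pd; have e2 := Mq_eq HW pd.
rewrite /Cp in e1; rewrite /Mp in e2; rewrite e1 in h3; rewrite e2 in h4.
have hlt : Num.max (Num.max (- r.1) (- r.2)) (Num.max (r.2 - Cq W PX) (r.1 + r.2 - Mq W PX)) < e.
  rewrite !gt_max; apply/andP; split; apply/andP; split; lra.
lra.
Qed.
End ClosedMain.


Theorem proposition1 (R : realType) (X1 X2 Y : finType) (W : X1 -> X2 -> Y -> R)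
  (HW : is_channel W) :
  Rsup W = Rbin W /\ Rbin W = Rmatch W.
Proof.
exact: (main_eq HW (Rmatch_closed HW)).
Qed.
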